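(* For any $n\geq 2$, the set $$\{{\sf Sum}(\sigma T_{k,1,n})\mid \sigma\in S_n,\ \sigma(k+1)=1,\ 1\leq k\leq n-1\}$$ is a basis of the free abelian group ${\rm Ker}(\beta_n)$, where $\sigma T=\{\sigma\circ\tau\mid\tau\in T\}$. In particular, the rank of ${\rm Ker}(\beta_n)$ equals $(n-1)!\cdot(n-1)$.
   Context: $S_m$ is the symmetric group on $\{1,\dots,m\}$ with product given by composition. Let $\mathbb Z\langle x_1,\dots,x_n\rangle$ be the free associative ring on $x_1,\dots,x_n$, with bracket $[u,v]=uv-vu$ and left-normed brackets $[u_1,\dots,u_r]=[[u_1,\dots,u_{r-1}],u_r]$. Let $\gamma_n$ be the additive subgroup generated by the monomials $x_{\sigma(1)}\cdots x_{\sigma(n)}$, $\sigma\in S_n$ (free abelian with these as basis); $\beta_n:\gamma_n\to\gamma_n$ is the homomorphism with $\beta_n(x_{\sigma(1)}\cdots x_{\sigma(n)})=[x_{\sigma(1)},\dots,x_{\sigma(n)}]$; for $T\subseteq S_n$, ${\sf Sum}(T)=\sum_{\sigma\in T}x_{\sigma(1)}\cdots x_{\sigma(n)}$. For $m\leq n$, $\iota_{m,n}:S_m\hookrightarrow S_n$ is the canonical embedding. An $(s,t)$-shuffle is a pair $(\alpha,\beta)$ of strictly increasing maps $\alpha:\{1,\dots,s\}\to\{1,\dots,s+t\}$, $\beta:\{1,\dots,t\}\to\{1,\dots,s+t\}$ with disjoint images; ${\sf Sh}^1(s,t)$ is the set of those with $\alpha(1)=1$. For $p,q\geq1$, $0\leq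 i\leq q-1$ and $(\alpha,\beta)\in{\sf Sh}^1(q-i,i)$, let $\tilde\sigma_{\alpha,\beta,p,q}\in S_{p+q}$ be given by $\tilde\sigma(j)=j$ for $1\leq j\leq p$, $\tilde\sigma(p+j)=p+\beta(i+1-j)$ for $1\leq j\leq i$, $\tilde\sigma(p+i+j)=p+\alpha(j)$ for $1\leq j\leq q-i$; let $\sigma_{\alpha,\beta,p,q}=\tilde\sigma_{\alpha,\beta,p,q}\circ(1,2)^i$ where $(1,2)$ is the transposition. Set $C_{p,q}=\{\sigma_{\alpha,\beta,p,q}\mid 0\leq i\leq q-1,\ (\alpha,\beta)\in{\sf Sh}^1(q-i,i)\}\subseteq S_{p+q}$. $\Phi_{k,l}\in S_{k+l}$ is defined by $\Phi_{k,l}(i)=i+k$ if $i\leq l$ and $\Phi_{k,l}(i)=i-l$ if $i>l$. Define $T_{k,l}=C_{k,l}\cup\{\Phi_{k,l}\circ\tau\mid\tau\in C_{l,k}\}\subseteq S_{k+l}$ and $T_{k,l,n}=\iota_{k+l,n}(T_{k,l})$ for $k+l\leq n$. *)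

(* Defs.v *)
(* All indices are 0-based: the letter x_{i+1} is encoded by
   the nat i, and a permutation s : 'S_n of {0,..,n-1} encodes the paper's
   permutation j |-> s(j-1)+1 of {1,..,n}. *)
From HB Require Import structures.
From mathcomp Require Import all_boot all_order all_algebra all_fingroup.
Set Implicit Arguments. Unset Strict Implicit. Unset Printing Implicit Defensive.
Import GRing.Theory.
Local Open Scope ring_scope.

(* An element is a formal finite Z-combination of words (seq nat);
   its coefficient at a word w is ncoef p w. *)
Definition npoly := seq (int * seq nat).
Definition ncoef (p : npoly) (w : seq nat) : int :=
  \sum_(a <- p | a.2 == w) a.1.
Definition nmul (p q : npoly) : npoly :=
  [seq (a.1 * b.1, a.2 ++ b.2) | a <- p, b <- q].
Definition nsub (p q : npoly) : npoly := p ++ [seq (- a.1, a.2) | a <- q].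
Definition nbr (p q : npoly) : npoly := nsub (nmul p q) (nmul q p).
Definition nletter (x : nat) : npoly := [:: (1, [:: x])].
Definition lbr (w : seq nat) : npoly :=
  match w with
  | [::] => [::]
  | x :: xs => foldl (fun acc y => nbr acc (nletter y)) (nletter x) xs
  end.

(* gamma_n is identified with Z^{S_n} via the monomial basis. *)
Definition word n (s : 'S_n) : seq nat := [seq val (s j) | j <- enum 'I_n].
Definition gam n := {ffun 'S_n -> int}.
Definition beta n (f : gam n) : gam n :=
  [ffun p : 'S_n => \sum_(s : 'S_n) f s * ncoef (lbr (word s)) (word p)].
Definition SumT n (T : {set 'S_n}) : gam n := [ffun p : 'S_n => ((p \in T) : int)].

Definition pcomp n (s t : 'S_n) : 'S_n := (t * s)%g.
Lemma pcompE n (s t : 'S_n) x : pcomp s t x = s (t x).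
Proof. by rewrite /pcomp permM. Qed.
Definition lcos n (s : 'S_n) (T : {set 'S_n}) : {set 'S_n} := [set pcomp s t | t in T].

(* (alpha, beta) in Sh^1(s,t), maps written 0-based *)
Definition isSh1 s t (a : {ffun 'I_s -> 'I_(s + t)}) (b : {ffun 'I_t -> 'I_(s + t)}) : bool :=
  [&& [forall x : 'I_s, forall y : 'I_s, (x < y)%N ==> (a x < a y)%N],
      [forall x : 'I_t, forall y : 'I_t, (x < y)%N ==> (b x < b y)%N],
      [forall x : 'I_s, forall y : 'I_t, val (a x) != val (b y)] &
      [forall x : 'I_s, (val x == 0%N) ==> (val (a x) == 0%N)]].

Definition fnat s r (f : {ffun 'I_s -> 'I_r}) (x : nat) : nat :=
  match @insub nat (fun k => (k < s)%N) 'I_s x with Some y => val (f y) | None => 0%N end.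

Definition stilde p i s t (a : {ffun 'I_s -> 'I_(s + t)}) (b : {ffun 'I_t -> 'I_(s + t)})
  (J : nat) : nat :=
  if (J < p)%N then J
  else if (J < p + i)%N then (p + fnat b (i - 1 - (J - p)))%N
  else (p + fnat a (J - p - i))%N.

Definition swp (i J : nat) : nat :=
  if odd i then (if J == 0%N then 1%N else if J == 1%N then 0%N else J) else J.

Definition inC p q m (s : 'S_m) : bool :=
  [exists i : 'I_q,
    [exists ab : {ffun 'I_(q - i) -> 'I_(q - i + i)} * {ffun 'I_i -> 'I_(q - i + i)},
      isSh1 ab.1 ab.2 &&
      [forall j : 'I_m, val (s j) == stilde p i ab.1 ab.2 (swp i j)]]].
Definition Cset p q : {set 'S_(p + q)} := [set s : 'S_(p + q) | inC p q s].

Definition Phi (k l J : nat) : nat := if (J < l)%N then (J + k)%N else (J - l)%N.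

Definition Tset k l : {set 'S_(k + l)} :=
  [set s : 'S_(k + l) | inC k l s ||
     [exists t : 'S_(k + l), inC l k t &&
        [forall j : 'I_(k + l), val (s j) == Phi k l (val (t j))]]].

Definition pext m (t : 'S_m) (j : nat) : nat :=
  match @insub nat (fun x => (x < m)%N) 'I_m j with Some y => val (t y) | None => j end.

Definition Tnset k l n : {set 'S_n} :=
  [set s : 'S_n | [exists t : 'S_(k + l), (t \in Tset k l) &&
       [forall j : 'I_n, val (s j) == pext t j]]].

(* index set: (sigma, k) with 1 <= k <= n-1 and sigma(k+1) = 1 (0-based: sigma(k) = 0) *)
Definition goodidx n (x : 'S_n * 'I_n) : bool := (0 < val x.2)%N && (val (x.1 x.2) == 0%N).
Definition Bvec n (x : 'S_n * 'I_n) : gam n := SumT (lcos x.1 (Tnset (val x.2) 1 n)).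

(* Main.v *)
Require Import Defs.
From HB Require Import structures.
From mathcomp Require Import all_boot all_order all_algebra all_fingroup.
From mathcomp Require Import ring zify.
Import GRing.Theory.

Section Part1.
Set Implicit Arguments. Unset Strict Implicit. Unset Printing Implicit Defensive.
Local Open Scope ring_scope.

Lemma ncoef_cat p q w : ncoef (p ++ q) w = ncoef p w + ncoef q w.
Proof. by rewrite /ncoef big_cat. Qed.

Lemma ncoef_nil w : ncoef [::] w = 0.
Proof. by rewrite /ncoef big_nil. Qed.

Lemma ncoef_nsub p q w : ncoef (nsub p q) w = ncoef p w - ncoef q w.
Proof.
rewrite /nsub ncoef_cat /ncoef big_map /= -sumrN; congr (_ + _).
Qed.

Lemma big_nmul (F : int * seq nat -> int) p q :
  \sum_(c <- nmul p q) F c = \sum_(a <- p) \sum_(b <- q) F (a.1 * b.1, a.2 ++ b.2).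
Proof. by rewrite /nmul big_allpairs_dep. Qed.

Lemma ncoef_nmul p q w : ncoef (nmul p q) w =
  \sum_(a <- p) \sum_(b <- q) (if a.2 ++ b.2 == w then a.1 * b.1 else 0).
Proof. by rewrite /ncoef big_mkcond big_nmul. Qed.

Lemma ncoef_nmulBl p q r w :
  ncoef (nmul (nsub p q) r) w = ncoef (nmul p r) w - ncoef (nmul q r) w.
Proof.
rewrite !ncoef_nmul /nsub big_cat big_map /= -sumrN; congr (_ + _).
apply: eq_bigr => a _; rewrite -sumrN; apply: eq_bigr => b _.
by case: ifP => _; rewrite ?mulNr ?oppr0.
Qed.

Lemma ncoef_nmulBr p q r w :
  ncoef (nmul p (nsub q r)) w = ncoef (nmul p q) w - ncoef (nmul p r) w.
Proof.
rewrite !ncoef_nmul -sumrB; apply: eq_bigr => a _.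
rewrite /nsub big_cat big_map /= -sumrN; congr (_ + _).
apply: eq_bigr => b _.
by case: ifP => _; rewrite ?mulrN ?oppr0.
Qed.

Lemma ncoef_nmulA p q r w :
  ncoef (nmul (nmul p q) r) w = ncoef (nmul p (nmul q r)) w.
Proof.
rewrite !ncoef_nmul big_nmul; apply: eq_bigr => a _.
rewrite big_mkcond big_nmul /=; apply: eq_bigr => b _.
apply: eq_bigr => c _; by rewrite catA mulrA.
Qed.

Lemma jacobi P L Y w :
  ncoef (nbr (nbr P L) Y) w - ncoef (nbr (nbr P Y) L) w =
  ncoef (nbr P (nbr L Y)) w.
Proof.
rewrite /nbr !ncoef_nsub !ncoef_nmulBl !ncoef_nmulBr !ncoef_nmulA.
ring.
Qed.

Definition Rf (y : nat) (f : seq nat -> int) (w : seq nat) : int :=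
  if ((0 < size w)%N && (nth 0%N w (size w).-1 == y)) then f (take (size w).-1 w) else 0.
Definition Lf (y : nat) (f : seq nat -> int) (w : seq nat) : int :=
  if w is c :: w' then (if c == y then f w' else 0) else 0.

Lemma Rf_nil y f : Rf y f [::] = 0. Proof. by []. Qed.
Lemma Rf_rcons y f w c : Rf y f (rcons w c) = if c == y then f w else 0.
Proof.
rewrite /Rf size_rcons /= nth_rcons ltnn eqxx.
by rewrite -cats1 take_size_cat.
Qed.

Lemma ncoef_ad Q y w :
  ncoef (nbr Q (nletter y)) w = Rf y (ncoef Q) w - Lf y (ncoef Q) w.
Proof.
rewrite /nbr ncoef_nsub !ncoef_nmul /nletter; congr (_ - _).
- case: (lastP w) => [|w' c].
    by rewrite Rf_nil big1 // => a _; rewrite big_cons big_nil addr0; case: (a.2).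
  rewrite Rf_rcons; case: eqP => [->|ne].
    rewrite /ncoef [RHS]big_mkcond; apply: eq_bigr => a _.
    by rewrite big_cons big_nil addr0 mulr1 cats1 eqseq_rcons eqxx andbT.
  rewrite big1 // => a _; rewrite big_cons big_nil addr0 cats1 eqseq_rcons.
  by case: eqP => // _; case: eqP => // e; case: ne.
- rewrite big_cons big_nil addr0.
  case: w => [|c w'] /=; first by rewrite big1.
  case: eqP => [->|ne]; first by rewrite /ncoef [RHS]big_mkcond; apply: eq_bigr => b _; rewrite mul1r eqseq_cons eqxx.
  rewrite big1 // => b _; rewrite eqseq_cons.
  by case: eqP => //; move=> e; case: ne.
Qed.

Definition adw (u : seq nat) (Q : Defs.npoly) : Defs.npoly :=
  foldl (fun acc y => nbr acc (nletter y)) Q u.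

Lemma adw_cons y u Q : adw (y :: u) Q = adw u (nbr Q (nletter y)).
Proof. by []. Qed.
Lemma adw_rcons y u Q : adw (rcons u y) Q = nbr (adw u Q) (nletter y).
Proof. by rewrite /adw foldl_rcons. Qed.
Lemma adw_cat u v Q : adw (u ++ v) Q = adw v (adw u Q).
Proof. by rewrite /adw foldl_cat. Qed.
Lemma lbr_cons x xs : lbr (x :: xs) = adw xs (nletter x).
Proof. by []. Qed.

Lemma adw_lin (I : Type) (r : seq I) (c : I -> int) (Q : I -> Defs.npoly) u Q0 :
  (forall w, ncoef Q0 w = \sum_(j <- r) c j * ncoef (Q j) w) ->
  forall w, ncoef (adw u Q0) w = \sum_(j <- r) c j * ncoef (adw u (Q j)) w.
Proof.
elim: u Q0 Q => [|y u IH] Q0 Q H //=.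
apply: (IH _ (fun j => nbr (Q j) (nletter y))) => w.
rewrite ncoef_ad.
under eq_bigr => j _ do rewrite ncoef_ad mulrBr.
rewrite sumrB; congr (_ - _).
- rewrite /Rf; case: ifP => _; first by rewrite H.
  by rewrite big1 // => j _; rewrite mulr0.
- rewrite /Lf; case: w => [|a w]; first by rewrite big1 // => j _; rewrite mulr0.
  case: ifP => _; first by rewrite H.
  by rewrite big1 // => j _; rewrite mulr0.
Qed.

Lemma lbr_anti x y v w :
  ncoef (lbr (x :: y :: v)) w = - ncoef (lbr (y :: x :: v)) w.
Proof.
rewrite !lbr_cons !adw_cons.
have := @adw_lin unit [:: tt] (fun _ => -1) (fun _ => nbr (nletter y) (nletter x)) v
   (nbr (nletter x) (nletter y)).
move=> H; rewrite H ?big_cons ?big_nil ?addr0 ?mulN1r //.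
by move=> w'; rewrite big_cons big_nil addr0 mulN1r /nbr !ncoef_nsub opprB.
Qed.

Lemma lbr_coef_head x xs w' : x \notin xs ->
  ncoef (lbr (x :: xs)) (x :: w') = (xs == w')%:R.
Proof.
elim/last_ind: xs w' => [|xs y IH] w'.
  move=> _; rewrite /lbr /= /ncoef big_cons big_nil addr0 /= eqseq_cons eqxx /=.
  by case: w' => [|? ?].
rewrite mem_rcons in_cons negb_or => /andP [xy xxs].
rewrite lbr_cons adw_rcons -lbr_cons ncoef_ad /Lf (negbTE xy) subr0.
case: (lastP w') => [|w'' c].
  by rewrite -[x :: [::]]/(rcons [::] x) Rf_rcons (negbTE xy); case: (xs) => [|? ?].
rewrite -rcons_cons Rf_rcons eqseq_rcons IH //.
by case: (c =P y) => [->|ne]; rewrite ?eqxx ?andbT //; case: (y =P c) => [e|]; [case: ne | rewrite andbF].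
Qed.

Fixpoint bs (r : nat) : seq bitseq :=
  if r is r'.+1 then [seq rcons m false | m <- bs r'] ++ [seq rcons m true | m <- bs r']
  else [:: [::]].

Lemma size_bs r m : m \in bs r -> size m = r.
Proof.
elim: r m => [|r IH] m /=; first by rewrite inE => /eqP ->.
rewrite mem_cat => /orP [] /mapP [m' /IH <- ->]; by rewrite size_rcons.
Qed.

Definition wd (a0 : nat) (R : seq nat) (m : bitseq) : seq nat :=
  rev (mask m R) ++ a0 :: mask (map negb m) R.
Definition sgn (m : bitseq) : int := (-1) ^+ count id m.

Lemma core R a0 P w :
  \sum_(m <- bs (size R)) sgn m * ncoef (adw (wd a0 R m) P) w =
  ncoef (nbr P (lbr (a0 :: R))) w.
Proof.
elim/last_ind: R P w => [|R y IH] P w.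
  by rewrite /= big_cons big_nil addr0 /sgn /= mul1r.
rewrite size_rcons /= big_cat !big_map /=.
have E1 : forall m, m \in bs (size R) ->
   sgn (rcons m false) * ncoef (adw (wd a0 (rcons R y) (rcons m false)) P) w =
   sgn m * ncoef (nbr (adw (wd a0 R m) P) (nletter y)) w.
  move=> m /size_bs sm; rewrite /wd.
  rewrite map_rcons !mask_rcons ?size_map // /= cats0 -cat_cons catA cats1.
  by rewrite adw_rcons /sgn -cats1 count_cat addn0.
have E2 : forall m, m \in bs (size R) ->
   sgn (rcons m true) * ncoef (adw (wd a0 (rcons R y) (rcons m true)) P) w =
   - (sgn m * ncoef (adw (wd a0 R m) (nbr P (nletter y))) w).
  move=> m /size_bs sm; rewrite /wd.
  rewrite map_rcons !mask_rcons ?size_map // /= cats0 cats1 rev_rcons /=.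
  by rewrite -adw_cons /sgn -cats1 count_cat /= addn1 exprS mulN1r mulNr.
rewrite (eq_big_seq _ E1) (eq_big_seq _ E2) sumrN.
rewrite (_ : foldl _ (nletter a0) (rcons R y) = nbr (lbr (a0 :: R)) (nletter y));
  last by rewrite foldl_rcons.
rewrite IH -(jacobi P (lbr (a0 :: R)) (nletter y)); congr (_ - _).
have := @adw_lin _ (bs (size R)) sgn (fun m => adw (wd a0 R m) P) [:: y]
   (nbr P (lbr (a0 :: R))).
by move=> H; rewrite H // => w'; rewrite IH.
Qed.

Definition swpL (c : nat) (L : seq nat) : seq nat :=
  if odd c then (if L is x :: y :: r then y :: x :: r else L) else L.

Lemma KER a0 b R suf w :
  ncoef (lbr ((a0 :: R) ++ b :: suf)) w +
  \sum_(m <- bs (size R)) ncoef (lbr (swpL (count id m) (b :: wd a0 R m) ++ suf)) w = 0.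
Proof.
have E : forall m, ncoef (lbr (swpL (count id m) (b :: wd a0 R m) ++ suf)) w =
    sgn m * ncoef (adw suf (adw (wd a0 R m) (nletter b))) w.
  move=> m; rewrite /swpL /sgn -signr_odd.
  have [x [rest ->]] : exists x rest, wd a0 R m = x :: rest.
    rewrite /wd; case: (rev (mask m R)) => [|x r]; by [exists a0; eexists | exists x; eexists].
  case: (odd _); rewrite ?expr1 ?expr0 ?mul1r ?mulN1r.
    by rewrite !cat_cons lbr_anti lbr_cons -adw_cat.
  by rewrite lbr_cons -adw_cat.
rewrite (eq_bigr _ (fun m _ => E m)).
have L1 : lbr ((a0 :: R) ++ b :: suf) = adw suf (nbr (lbr (a0 :: R)) (nletter b)).
  by rewrite cat_cons lbr_cons -cat_rcons adw_cat adw_rcons.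
rewrite L1.
have H := @adw_lin _ (None :: [seq Some m | m <- bs (size R)])
  (fun o => if o is Some m then sgn m else 1)
  (fun o => if o is Some m then adw (wd a0 R m) (nletter b) else nbr (lbr (a0 :: R)) (nletter b))
  suf [::].
have Z := @adw_lin unit [::] (fun _ => 1) (fun _ => [::]) suf [::].
have H1 : forall w, ncoef [::] w =
     \sum_(j <- None :: [seq Some m | m <- bs (size R)])
        (if j is Some m then sgn m else 1) *
        ncoef (if j is Some m then adw (wd a0 R m) (nletter b)
               else nbr (lbr (a0 :: R)) (nletter b)) w.
  move=> w'; rewrite big_cons big_map mul1r ncoef_nil core.
  by rewrite /nbr !ncoef_nsub addrC subrKA subrr.
have H2 := H H1 w; rewrite big_cons big_map mul1r in H2.
rewrite -H2.
by rewrite Z ?big_nil // => w'; rewrite ncoef_nil big_nil.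
Qed.

End Part1.

Section Part2.
Set Implicit Arguments. Unset Strict Implicit. Unset Printing Implicit Defensive.
Local Open Scope nat_scope.

Lemma pextE m (t : 'S_m) (j : 'I_m) : pext t j = val (t j).
Proof.
rewrite /pext insubT // => h.
by rewrite (_ : Sub (nat_of_ord j) h = j) //; apply: val_inj.
Qed.

Lemma pext_ge m (t : 'S_m) j : m <= j -> pext t j = j.
Proof. by move=> h; rewrite /pext insubF // ltnNge h. Qed.

Lemma pext_ltE m (t : 'S_m) j (h : j < m) : pext t j = val (t (Ordinal h)).
Proof. exact: (pextE t (Ordinal h)). Qed.

Lemma pext_lt m (t : 'S_m) j : j < m -> pext t j < m.
Proof. by move=> h; rewrite (pext_ltE _ h) ltn_ord. Qed.

Lemma word_pext m (t : 'S_m) : word t = [seq pext t j | j <- iota 0 m].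
Proof.
rewrite /word -val_enum_ord -map_comp; apply: eq_map => j /=; by rewrite pextE.
Qed.

Lemma size_word m (t : 'S_m) : size (word t) = m.
Proof. by rewrite word_pext size_map size_iota. Qed.

Lemma nth_word m (t : 'S_m) j : j < m -> nth 0 (word t) j = pext t j.
Proof. by move=> h; rewrite word_pext (nth_map 0) ?size_iota // nth_iota. Qed.

Lemma word_inj m : injective (@word m).
Proof.
move=> s t e; apply/permP => j; apply: val_inj.
by rewrite -!pextE -!nth_word // e.
Qed.

Lemma pext_inj m (t : 'S_m) : injective (pext t).
Proof.
move=> x y.
case: (ltnP x m) => hx; case: (ltnP y m) => hy.
- rewrite (pext_ltE _ hx) (pext_ltE _ hy) => /val_inj /perm_inj [] //.
- by rewrite (pext_ltE _ hx) (pext_ge _ hy) => e; move: hy; rewrite -e leqNgt ltn_ord.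
- by rewrite (pext_ltE _ hy) (pext_ge _ hx) => e; move: hx; rewrite e leqNgt ltn_ord.
- by rewrite !pext_ge.
Qed.

Lemma pext_mul m (s t : 'S_m) j : pext (Defs.pcomp s t) j = pext s (pext t j).
Proof.
case: (ltnP j m) => h.
  rewrite (pext_ltE _ h) (pext_ltE _ (pext_lt t h)) Defs.pcompE.
  by congr (val (s _)); apply: val_inj; rewrite /= (pext_ltE _ h).
by rewrite !pext_ge.
Qed.

Lemma word_pcomp m (s t : 'S_m) : word (Defs.pcomp s t) = map (pext s) (word t).
Proof. by rewrite !word_pext -map_comp; apply: eq_map => j; rewrite /= pext_mul. Qed.

Lemma pextK m (s : 'S_m) j : pext (s^-1)%g (pext s j) = j.
Proof.
case: (ltnP j m) => h; last by rewrite !pext_ge.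
rewrite (pext_ltE _ (pext_lt s h)).
have -> : Ordinal (pext_lt s h) = s (Ordinal h) by apply: val_inj; rewrite /= (pext_ltE _ h).
by rewrite permK.
Qed.

Lemma perm_exists m L : perm_eq L (iota 0 m) -> exists s : 'S_m, word s = L.
Proof.
move=> pL.
have uL : uniq L by rewrite (perm_uniq pL) iota_uniq.
have sL : size L = m by rewrite (perm_size pL) size_iota.
have bL' : forall j : 'I_m, nth 0 L j < m.
  move=> j; have h : j < size L by rewrite sL.
  by have := mem_nth 0 h; rewrite (perm_mem pL) mem_iota.
pose f := fun j : 'I_m => Ordinal (bL' j).
have fi : injective f.
  move=> x y /(congr1 val) /= e; apply: val_inj.
  by apply/eqP; rewrite -(nth_uniq 0 _ _ uL) ?sL ?ltn_ord // e.
exists (perm fi); rewrite word_pext -[RHS](mkseq_nth 0) /mkseq sL; apply/eq_in_map => j.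
by rewrite mem_iota /= => h; rewrite (pext_ltE _ h) permE.
Qed.

End Part2.

Section Part3.
Set Implicit Arguments. Unset Strict Implicit. Unset Printing Implicit Defensive.
Local Open Scope nat_scope.

Definition Ik k := iota 1 k.-1.
Definition cw k m := swpL (count id m) (k :: wd 0 (Ik k) m).
Definition Wk k := iota 0 (k + 1) :: [seq cw k m | m <- bs k.-1].

Lemma mem_bs m : m \in bs (size m).
Proof.
elim/last_ind: m => [|m b IH] /=; first by rewrite inE.
rewrite size_rcons /= mem_cat; case: b; apply/orP; [right|left]; exact: map_f.
Qed.

Lemma uniq_bs r : uniq (bs r).
Proof.
elim: r => [|r IH] //=.
rewrite cat_uniq !map_inj_uniq ?IH //; try by move=> x y /rcons_inj [].
rewrite andbT; apply/hasPn => x /mapP [m _ ->]; apply/mapP => [[m' _ /rcons_inj [_]]] //.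
Qed.

Lemma mask_mem_eq (s : seq nat) m : uniq s -> size m = size s ->
  [seq x \in mask m s | x <- s] = m.
Proof.
elim: s m => [|x s IH] [|b m] //= /andP [xs us] [sm].
congr (_ :: _).
  by case: b => /=; rewrite ?inE ?eqxx //; apply/negP => /mem_mask; rewrite (negbTE xs).
rewrite -[RHS](IH m us sm); apply/eq_in_map => y ys.
case: b => //=; rewrite inE; case: eqP => // e; by move: xs; rewrite -e ys.
Qed.

Lemma count_mask_split (s : seq nat) m (p : pred nat) : size m = size s ->
  count p (mask m s) + count p (mask (map negb m) s) = count p s.
Proof.
elim: s m => [|x s IH] [|b m] //= [sm].
by case: b => /=; rewrite -(IH m sm); lia.
Qed.

Lemma perm_mask_split (s : seq nat) m : size m = size s ->
  perm_eq (mask m s ++ mask (map negb m) s) s.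
Proof. by move=> sm; apply/seq.permP => p; rewrite count_cat count_mask_split. Qed.

Lemma mask_disj (s : seq nat) m x : uniq s -> size m = size s ->
  x \in mask m s -> x \in mask (map negb m) s -> False.
Proof.
move=> us sm h1 h2; have := perm_uniq (perm_mask_split sm); rewrite us.
rewrite cat_uniq => /and3P [_ /hasPn H _]; by move: (H x h2); rewrite h1.
Qed.

Lemma swpL_perm c L : perm_eq (swpL c L) L.
Proof.
rewrite /swpL; case: (odd c) => //; case: L => [|x [|y r]] //.
by apply/seq.permP => p /=; lia.
Qed.

Lemma map_swpL (f : nat -> nat) c L : map f (swpL c L) = swpL c (map f L).
Proof. by rewrite /swpL; case: (odd c) => //; case: L => [|x [|y r]]. Qed.

Lemma map_wd (f : nat -> nat) a0 R m : map f (wd a0 R m) = wd (f a0) (map f R) m.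
Proof. by rewrite /wd map_cat map_rev /= !map_mask. Qed.

Lemma size_Ik k : size (Ik k) = k.-1.
Proof. by rewrite /Ik size_iota. Qed.

Lemma mem_Ik k x : (x \in Ik k) = (0 < x < k).
Proof. rewrite /Ik mem_iota; case: k => [|k] /=; lia. Qed.

Lemma iota_Ik k : 0 < k -> iota 0 (k + 1) = 0 :: rcons (Ik k) k.
Proof.
case: k => [|k] // _; rewrite addn1 /= /Ik /= -cats1.
have e : iota 1 (k + 1) = iota 1 k ++ [:: k.+1] by rewrite iotaD add1n.
by rewrite addn1 in e; rewrite -e.
Qed.

Lemma perm_cw k m : 0 < k -> size m = k.-1 -> perm_eq (cw k m) (iota 0 (k + 1)).
Proof.
move=> k0 sm; rewrite /cw (perm_trans (swpL_perm _ _)) // iota_Ik //.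
apply/seq.permP => p; rewrite /wd /= count_cat count_rev /= -cats1 count_cat /=.
have sm' : size m = size (Ik k) by rewrite size_Ik.
have := count_mask_split p sm'; lia.
Qed.

Lemma size_mask_Ik k m : size m = k.-1 -> size (mask m (Ik k)) = count id m.
Proof. by move=> sm; rewrite size_mask // size_Ik. Qed.

Lemma mask_Ik_pos k m x : x \in mask m (Ik k) -> 0 < x < k.
Proof. by move/mem_mask; rewrite mem_Ik. Qed.

Lemma mask_Ik_pos' k m x : x \in mask m (Ik k) -> 0 < x < k.
Proof. exact: mask_Ik_pos. Qed.

Lemma cw_cases k m : 0 < k -> size m = k.-1 ->
  let M := mask m (Ik k) in let N := mask (map negb m) (Ik k) in
  (~~ odd (count id m) /\ cw k m = k :: rev M ++ 0 :: N) \/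
  (exists y M', odd (count id m) /\ rev M = y :: M' /\ cw k m = y :: k :: M' ++ 0 :: N).
Proof.
move=> k0 sm M N; rewrite /cw /wd /swpL -/M -/N.
case: ifP => od; last by left.
right; case e: (rev M) => [|y M'].
  by move: (size_mask_Ik sm); rewrite -/M -size_rev e /=; move: od; case: (count id m).
by exists y, M'.
Qed.

Lemma cw_head k m : 0 < k -> size m = k.-1 -> head 0 (cw k m) != 0.
Proof.
move=> k0 sm; case: (cw_cases k0 sm) => [[_ ->]|[y [M' [_ [e ->]]]]] /=; first by lia.
have : y \in rev (mask m (Ik k)) by rewrite e inE eqxx.
by rewrite mem_rev => /mask_Ik_pos; lia.
Qed.

Definition pre (L : seq nat) := take (index 0 L) L.

Lemma pre_cw k m : 0 < k -> size m = k.-1 -> pre (cw k m) =i k :: mask m (Ik k).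
Proof.
move=> k0 sm; set M := mask m (Ik k).
have M0 : 0 \notin M by apply/negP => /mask_Ik_pos.
case: (cw_cases k0 sm) => [[_ ->]|[y [M' [_ [e ->]]]]] /=.
  rewrite /pre /= (_ : (k == 0) = false); last by lia.
  rewrite index_cat mem_rev (negbTE M0) index_head addn0 size_rev.
  rewrite -/M -(size_rev M) [take _ _]/= take_size_cat // => x.
  by rewrite !inE mem_rev.
have yM : y \in M by rewrite -mem_rev e inE eqxx.
have y0 : (y == 0) = false by apply/negP => /eqP y0; move: M0; rewrite -y0 yM.
have M'0 : 0 \notin M' by apply/negP => h; move: M0; rewrite -mem_rev e inE h orbT.
rewrite /pre /= y0 (_ : (k == 0) = false); last by lia.
rewrite index_cat (negbTE M'0) index_head addn0 [take _ _]/= take_size_cat //.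
move=> x; rewrite !inE -[x \in M]mem_rev (e : rev M = _) inE; by case: (x == y); case: (x == k).
Qed.

Lemma cw_inj k m1 m2 : 0 < k -> size m1 = k.-1 -> size m2 = k.-1 ->
  cw k m1 = cw k m2 -> m1 = m2.
Proof.
move=> k0 s1 s2 e.
have H : mask m1 (Ik k) =i mask m2 (Ik k).
  move=> x; have h1 := pre_cw k0 s1 x; have h2 := pre_cw k0 s2 x.
  rewrite e h2 !inE in h1; case: (x =P k) => [->|_] in h1 *; last by move: h1 => /= ->.
  case g1: (k \in mask m1 (Ik k)); first by have := mask_Ik_pos g1; lia.
  case g2: (k \in mask m2 (Ik k)) => //; by have := mask_Ik_pos g2; lia.
have uI : uniq (Ik k) by rewrite /Ik iota_uniq.
rewrite -(mask_mem_eq uI (_ : size m1 = size (Ik k))) ?size_Ik //.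
rewrite -(mask_mem_eq uI (_ : size m2 = size (Ik k))) ?size_Ik //.
by apply: eq_map => x; rewrite H.
Qed.

Lemma uniq_Wk k : 0 < k -> uniq (Wk k).
Proof.
move=> k0; rewrite /Wk /= map_inj_in_uniq ?uniq_bs ?andbT.
  apply/mapP => [[m /size_bs sm e]].
  by have := cw_head k0 sm; rewrite -e iota_Ik.
by move=> x y /size_bs sx /size_bs sy; apply: cw_inj.
Qed.

End Part3.

Section Part4.
Set Implicit Arguments. Unset Strict Implicit. Unset Printing Implicit Defensive.
Local Open Scope nat_scope.

Definition fl s r (f : {ffun 'I_s -> 'I_r}) := [seq fnat f j | j <- iota 0 s].

Lemma fnat_ord s r (f : {ffun 'I_s -> 'I_r}) (x : 'I_s) : fnat f x = val (f x).
Proof.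
rewrite /fnat insubT // => h.
by rewrite (_ : Sub (nat_of_ord x) h = x) //; apply: val_inj.
Qed.

Lemma fnat_ltE s r (f : {ffun 'I_s -> 'I_r}) j (h : j < s) : fnat f j = val (f (Ordinal h)).
Proof. exact: (fnat_ord f (Ordinal h)). Qed.

Lemma fnat_lt s r (f : {ffun 'I_s -> 'I_r}) j : j < s -> fnat f j < r.
Proof. by move=> h; rewrite (fnat_ltE f h) ltn_ord. Qed.

Lemma size_fl s r (f : {ffun 'I_s -> 'I_r}) : size (fl f) = s.
Proof. by rewrite size_map size_iota. Qed.

Lemma nth_fl s r (f : {ffun 'I_s -> 'I_r}) j : j < s -> nth 0 (fl f) j = fnat f j.
Proof. by move=> h; rewrite (nth_map 0) ?size_iota // nth_iota. Qed.

Lemma mem_fl s r (f : {ffun 'I_s -> 'I_r}) x :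
  x \in fl f -> exists j : 'I_s, x = val (f j).
Proof.
case/mapP => j; rewrite mem_iota add0n => /andP [_ h] ->.
by exists (Ordinal h); rewrite (fnat_ltE f h).
Qed.

Lemma sorted_fl s r (f : {ffun 'I_s -> 'I_r}) :
  (forall x y : 'I_s, x < y -> f x < f y) -> sorted ltn (fl f).
Proof.
move=> H; rewrite sorted_pairwise; last exact: ltn_trans.
apply/(pairwiseP 0) => i j; rewrite !inE size_fl => hi hj hij.
by rewrite !nth_fl // (fnat_ltE f hi) (fnat_ltE f hj); apply: H.
Qed.

Lemma count_negb (m : bitseq) : count id (map negb m) = size m - count id m.
Proof.
rewrite count_map; have := count_predC id m.
rewrite (_ : count (preim negb id) m = count (predC id) m) //; lia.
Qed.

Lemma isSh1P s t (a : {ffun 'I_s -> 'I_(s + t)}) (b : {ffun 'I_t -> 'I_(s + t)}) :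
  isSh1 a b <->
  [/\ (forall x y : 'I_s, x < y -> a x < a y),
      (forall x y : 'I_t, x < y -> b x < b y),
      (forall x y, val (a x) != val (b y)) &
      (forall x : 'I_s, val x = 0 -> val (a x) = 0)].
Proof.
split.
  case/and4P => /forallP h1 /forallP h2 /forallP h3 /forallP h4; split.
  - by move=> x y; move/forallP: (h1 x) => /(_ y) /implyP.
  - by move=> x y; move/forallP: (h2 x) => /(_ y) /implyP.
  - by move=> x y; move/forallP: (h3 x) => /(_ y).
  - by move=> x /eqP; move/implyP: (h4 x) => H /H /eqP.
case=> h1 h2 h3 h4; apply/and4P; split.
- by apply/forallP => x; apply/forallP => y; apply/implyP; apply: h1.
- by apply/forallP => x; apply/forallP => y; apply/implyP; apply: h2.
- by apply/forallP => x; apply/forallP => y; apply: h3.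
- by apply/forallP => x; apply/implyP => /eqP /h4 ->.
Qed.

Lemma sh_to_mask k s t (a : {ffun 'I_s -> 'I_(s + t)}) (b : {ffun 'I_t -> 'I_(s + t)}) :
  0 < s -> s + t = k -> isSh1 a b ->
  exists m, [/\ size m = k.-1, count id m = t, fl b = mask m (Ik k) &
                fl a = 0 :: mask (map negb m) (Ik k)].
Proof.
move=> s0 rk /isSh1P [h1 h2 h3 h4].
have sA := sorted_fl h1; have sB := sorted_fl h2.
have uA := sorted_uniq ltn_trans ltnn sA; have uB := sorted_uniq ltn_trans ltnn sB.
have disj : forall x, x \in fl a -> x \in fl b -> False.
  move=> x /mem_fl [i ->] /mem_fl [j /eqP]; by rewrite (negbTE (h3 i j)).
have bnd : forall x, x \in fl a ++ fl b -> x < k.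
  move=> x; rewrite mem_cat -rk => /orP [] /mem_fl [i ->]; exact: ltn_ord.
have U : uniq (fl a ++ fl b).
  rewrite cat_uniq uA uB andbT; apply/hasPn => x xb; apply/negP => xa; exact: disj xa xb.
have cover : forall x, x < k -> (x \in fl a) || (x \in fl b).
  move=> x xk; rewrite -mem_cat.
  have sub : {subset fl a ++ fl b <= iota 0 k} by move=> y /bnd; rewrite mem_iota.
  have sz : size (iota 0 k) <= size (fl a ++ fl b) by rewrite size_cat !size_fl size_iota rk.
  have [_ ->] := uniq_min_size U sub sz.
  by rewrite mem_iota.
have a0 : nth 0 (fl a) 0 = 0 by rewrite nth_fl // (fnat_ltE a s0) h4.
have [A' eA] : exists A', fl a = 0 :: A'.
  by case e: (fl a) => [|x A']; [move: (size_fl a); rewrite e /=; lia | exists A'; move: a0; rewrite e /= => ->].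
have B0 : 0 \notin fl b by apply/negP => h; apply: (disj 0) => //; rewrite eA inE eqxx.
set m := [seq x \in fl b | x <- Ik k].
have sm : size m = k.-1 by rewrite size_map size_Ik.
have EB : fl b = mask m (Ik k).
  rewrite -filter_mask; apply: (irr_sorted_eq ltn_trans ltnn) => //.
    by apply: sorted_filter; [exact: ltn_trans | exact: iota_ltn_sorted].
  move=> x; rewrite mem_filter mem_Ik; case xb: (x \in fl b) => //=.
  have := bnd x; rewrite mem_cat xb orbT => /(_ isT) ->; rewrite andbT.
  by case: x xb => // xb; rewrite xb in B0.
exists m; split => //.
  by rewrite -(size_mask_Ik sm) -EB size_fl.
rewrite eA; congr (_ :: _).
have sA' : sorted ltn A' by move: sA; rewrite eA => /path_sorted.
rewrite (_ : map negb m = [seq x \notin fl b | x <- Ik k]); last by rewrite -map_comp.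
rewrite -filter_mask; apply: (irr_sorted_eq ltn_trans ltnn) => //.
  by apply: sorted_filter; [exact: ltn_trans | exact: iota_ltn_sorted].
have uA' : 0 \notin A' by move: uA; rewrite eA /= => /andP [].
move=> x; rewrite mem_filter mem_Ik; apply/idP/idP.
  move=> xA; have xa : x \in fl a by rewrite eA inE xA orbT.
  have := bnd x; rewrite mem_cat xa => /(_ isT) ->; rewrite andbT.
  apply/andP; split; first by apply/negP => xb; exact: disj xa xb.
  by case: x xA {xa} => // xA; rewrite xA in uA'.
case/andP => xb /andP [x0 xk]; have := cover x xk; rewrite (negbTE xb) orbF eA inE.
by case/orP => // /eqP x00; rewrite x00 in x0.
Qed.

Lemma mk_ffun s r (L : seq nat) : 0 < r -> all (fun x => x < r) L ->
  exists f : {ffun 'I_s -> 'I_r}, forall j : 'I_s, val (f j) = nth 0 L j.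
Proof.
move=> r0 aL.
have H : forall j : 'I_s, nth 0 L j < r.
  move=> j; case: (ltnP j (size L)) => h; first by apply: (allP aL); exact: mem_nth.
  by rewrite nth_default.
by exists [ffun j => Ordinal (H j)] => j; rewrite ffunE.
Qed.

Lemma fl_mk s r (f : {ffun 'I_s -> 'I_r}) L : size L = s ->
  (forall j : 'I_s, val (f j) = nth 0 L j) -> fl f = L.
Proof.
move=> sL H; rewrite /fl -[RHS](mkseq_nth 0) /mkseq sL; apply/eq_in_map => j.
by rewrite mem_iota /= => h; rewrite (fnat_ltE f h) H.
Qed.

Lemma mask_to_sh k m : 0 < k -> size m = k.-1 ->
  exists (a : {ffun 'I_(k - count id m) -> 'I_(k - count id m + count id m)})
         (b : {ffun 'I_(count id m) -> 'I_(k - count id m + count id m)}),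
  [/\ isSh1 a b, fl b = mask m (Ik k) & fl a = 0 :: mask (map negb m) (Ik k)].
Proof.
move=> k0 sm; set i := count id m.
have ik : i < k by have := count_size id m; rewrite -/i sm; lia.
have rk : k - i + i = k by lia.
set B := mask m (Ik k); set A := 0 :: mask (map negb m) (Ik k).
have sB : size B = i by rewrite size_mask_Ik.
have sA : size A = k - i by rewrite /= size_mask ?size_map ?size_Ik // count_negb sm -/i -subn1; lia.
have aB : all (fun x => x < k - i + i) B by apply/allP => x /mask_Ik_pos; lia.
have aA : all (fun x => x < k - i + i) A.
  apply/allP => x; rewrite inE => /orP [/eqP -> | /mem_mask]; [lia | rewrite mem_Ik; lia].
have [a ha] := @mk_ffun (k - i) (k - i + i) A (ltac:(lia)) aA.
have [b hb] := @mk_ffun i (k - i + i) B (ltac:(lia)) aB.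
exists a, b; split; [|exact: fl_mk|exact: fl_mk].
have sorA : sorted ltn A.
  rewrite /A /= path_sortedE; last exact: ltn_trans.
  apply/andP; split; first by apply/allP => x /mem_mask; rewrite mem_Ik; lia.
  by apply: sorted_mask; [exact: ltn_trans | exact: iota_ltn_sorted].
have sorB : sorted ltn B by apply: sorted_mask; [exact: ltn_trans | exact: iota_ltn_sorted].
apply/isSh1P; split.
- move=> x y hxy; rewrite !ha; move: sorA; rewrite sorted_pairwise; last exact: ltn_trans.
  by move/(pairwiseP 0); apply; rewrite ?inE ?sA ?ltn_ord.
- move=> x y hxy; rewrite !hb; move: sorB; rewrite sorted_pairwise; last exact: ltn_trans.
  by move/(pairwiseP 0); apply; rewrite ?inE ?sB ?ltn_ord.
- move=> x y; rewrite ha hb; apply/negP => /eqP e.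
  have yB : nth 0 B y \in B by apply: mem_nth; rewrite sB ltn_ord.
  have : nth 0 A x \in A by apply: mem_nth; rewrite sA ltn_ord.
  rewrite e inE => /orP [/eqP y0 | yN].
    by move: yB; rewrite y0 => /mask_Ik_pos.
  apply: (mask_disj (_ : uniq (Ik k)) (_ : size m = size (Ik k)) yB yN).
    exact: iota_uniq.
  by rewrite size_Ik.
- by move=> x x0; rewrite ha x0.
Qed.

End Part4.

Section Part5.
Set Implicit Arguments. Unset Strict Implicit. Unset Printing Implicit Defensive.
Local Open Scope nat_scope.

Lemma stilde_nth k i (a : {ffun 'I_(k - i) -> 'I_(k - i + i)}) (b : {ffun 'I_i -> 'I_(k - i + i)}) J :
  i < k -> J < k + 1 ->
  Phi k 1 (stilde 1 i a b J) = nth 0 (k :: rev (fl b) ++ fl a) J /\ stilde 1 i a b J < k + 1.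
Proof.
move=> ik Jk; rewrite /stilde /Phi.
case: J Jk => [|J] Jk /=; first by split => //; lia.
have e : k - i + i = k by lia.
case: (ltnP J.+1 (1 + i)) => h.
  have hb : i - 1 - (J.+1 - 1) < i by lia.
  have bl : fnat b (i - 1 - (J.+1 - 1)) < k by have := fnat_lt b hb; lia.
  rewrite (_ : 1 + _ < 1 = false); last by lia.
  rewrite nth_cat size_rev size_fl (_ : J < i); last by lia.
  rewrite nth_rev ?size_fl; last by lia.
  rewrite nth_fl; last by lia.
  split; last by lia.
  rewrite (_ : i - J.+1 = i - 1 - (J.+1 - 1)); last by lia.
  lia.
have ha : J.+1 - 1 - i < k - i by lia.
have al : fnat a (J.+1 - 1 - i) < k by have := fnat_lt a ha; lia.
rewrite (_ : 1 + _ < 1 = false); last by lia.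
rewrite nth_cat size_rev size_fl (_ : J < i = false); last by lia.
rewrite nth_fl; last by lia.
split; last by lia.
rewrite (_ : J - i = J.+1 - 1 - i); last by lia.
lia.
Qed.

Lemma swp_map c L : 1 < size L ->
  [seq nth 0 L (swp c j) | j <- iota 0 (size L)] = swpL c L.
Proof.
move=> sL; rewrite /swp /swpL; case: (odd c); last first.
  by rewrite -{3}(mkseq_nth 0 L).
case: L sL => [|x [|y r]] //= _.
congr (_ :: _ :: _); rewrite -[RHS](mkseq_nth 0 r) /mkseq.
rewrite -[2]/(2 + 0) iotaDl -map_comp; apply: eq_map => j /=.
by [].
Qed.

Lemma nth_swpL c L j : 1 < size L -> j < size L ->
  nth 0 (swpL c L) j = nth 0 L (swp c j).
Proof.
move=> sL jL; rewrite -swp_map // (nth_map 0) ?size_iota // nth_iota //.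
Qed.

Lemma size_L k i (a : {ffun 'I_(k - i) -> 'I_(k - i + i)}) (b : {ffun 'I_i -> 'I_(k - i + i)}) :
  i < k -> size (k :: rev (fl b) ++ fl a) = k + 1.
Proof. by move=> ik; rewrite /= size_cat size_rev !size_fl; lia. Qed.

Lemma swp_lt c j K : 1 < K -> j < K -> swp c j < K.
Proof. move=> h1 h2; rewrite /swp; case: (odd c) => //; case: ifP => _; [lia|]; case: ifP => _; lia. Qed.

Lemma word_C k i (a : {ffun 'I_(k - i) -> 'I_(k - i + i)}) (b : {ffun 'I_i -> 'I_(k - i + i)})
  (t : 'S_(k + 1)) : i < k ->
  (forall j : 'I_(k + 1), val (t j) = Phi k 1 (stilde 1 i a b (swp i j))) ->
  word t = swpL i (k :: rev (fl b) ++ fl a).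
Proof.
move=> ik H; have sL := size_L a b ik.
rewrite word_pext -swp_map; last by rewrite sL; lia.
rewrite sL; apply/eq_in_map => j; rewrite mem_iota /= => jk.
rewrite (pext_ltE _ jk) H /=.
have k1 : 1 < k + 1 by lia.
by have [-> _] := stilde_nth a b ik (swp_lt i k1 jk).
Qed.

Lemma Phi_inj k x y : x < k + 1 -> y < k + 1 -> Phi k 1 x = Phi k 1 y -> x = y.
Proof. rewrite /Phi; case: ifP; case: ifP; lia. Qed.

Lemma phi_exists k : exists phi : 'S_(k + 1), forall x : 'I_(k + 1), val (phi x) = Phi k 1 x.
Proof.
have pe : perm_eq [seq Phi k 1 j | j <- iota 0 (k + 1)] (iota 0 (k + 1)).
  rewrite addn1 /= {1}/Phi /= add0n -[1]/(1 + 0) iotaDl -map_comp.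
  rewrite (_ : [seq (Phi k 1 \o addn 1) i | i <- iota 0 k] = iota 0 k); last first.
    by rewrite -{2}(map_id (iota 0 k)); apply: eq_map => j; rewrite /= /Phi /=; lia.
  have e : iota 0 (k + 1) = iota 0 k ++ [:: k] by rewrite iotaD.
  rewrite addn1 in e; rewrite -iotaDl -[0 :: iota (1 + 0) k]/(iota 0 k.+1) e cats1.
  by rewrite perm_sym perm_rcons.
have [phi hphi] := perm_exists pe.
exists phi => -[x hx]; have := congr1 (fun L => nth 0 L x) hphi.
by rewrite nth_word // (pext_ltE _ hx) (nth_map 0) ?size_iota // nth_iota.
Qed.

End Part5.

Section Part6.
Set Implicit Arguments. Unset Strict Implicit. Unset Printing Implicit Defensive.
Local Open Scope nat_scope.

Lemma stilde_k1 k i s t (a : {ffun 'I_s -> 'I_(s + t)}) (b : {ffun 'I_t -> 'I_(s + t)}) J :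
  i = 0 -> fnat a 0 = 0 -> J < k + 1 -> stilde k i a b J = J.
Proof.
move=> -> a0 Jk; rewrite /stilde addn0; case: ifP => // /negbT; rewrite -leqNgt => h.
have -> : J = k by lia.
by rewrite ltnn subnn subn0 a0 addn0.
Qed.

Lemma cw_L k m (a : {ffun 'I_(k - count id m) -> 'I_(k - count id m + count id m)})
  (b : {ffun 'I_(count id m) -> 'I_(k - count id m + count id m)}) :
  fl b = mask m (Ik k) -> fl a = 0 :: mask (map negb m) (Ik k) ->
  cw k m = swpL (count id m) (k :: rev (fl b) ++ fl a).
Proof. by move=> -> ->. Qed.

Lemma L1a k (t : 'S_(k + 1)) : 0 < k -> t \in Tset k 1 -> word t \in Wk k.
Proof.
move=> k0; rewrite /Tset inE => /orP [].
  case/existsP => i /existsP [[a b]] /andP [sh /forallP H] /=.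
  have i0 : nat_of_ord i = 0 by have := ltn_ord i; lia.
  have [_ _ _ h4] := (isSh1P a b).1 sh.
  have h0 : 0 < 1 - i by lia.
  have a0 : fnat a 0 = 0 by rewrite (fnat_ltE a h0) h4.
  have -> : word t = iota 0 (k + 1).
    rewrite word_pext -[RHS]map_id; apply/eq_in_map => j; rewrite mem_iota /= => jk.
    rewrite (pext_ltE _ jk); move/eqP: (H (Ordinal jk)) => -> /=.
    have -> : swp i j = j by rewrite /swp i0.
    by rewrite stilde_k1 //; lia.
  by rewrite inE eqxx.
case/existsP => t' /andP [hC /forallP H].
case/existsP: hC => i /existsP [[a b]] /andP [sh /forallP H'] /=.
have ik := ltn_ord i.
have s0 : 0 < k - i by lia.
have sk : k - i + i = k by lia.
have [m [sm cm eb ea]] := sh_to_mask s0 sk sh.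
have -> : word t = swpL i (k :: rev (fl b) ++ fl a).
  apply: word_C => // j; move/eqP: (H j) => ->; by move/eqP: (H' j) => ->.
rewrite inE; apply/orP; right; apply/mapP; exists m.
  by rewrite -sm; exact: mem_bs.
by rewrite /cw /wd -eb -ea cm.
Qed.

Lemma word1 m : word (1%g : 'S_m) = iota 0 m.
Proof.
rewrite word_pext -[RHS]map_id; apply/eq_in_map => j; rewrite mem_iota /= => jk.
by rewrite (pext_ltE _ jk) perm1.
Qed.

Lemma one_in_Tset k : (1%g : 'S_(k + 1)) \in Tset k 1.
Proof.
rewrite /Tset inE; apply/orP; left.
apply/existsP; exists ord0; apply/existsP.
exists ([ffun _ => ord0], [ffun _ => ord0]); apply/andP; split.
  apply/isSh1P; split.
  - by move=> [x hx] [y hy] /=; lia.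
  - by move=> [x hx].
  - by move=> x [y hy].
  - by move=> x _; rewrite ffunE.
apply/forallP => j; apply/eqP; rewrite perm1 /=.
rewrite stilde_k1 //; last exact: ltn_ord.
by rewrite /fnat; case: insub => // y; rewrite ffunE.
Qed.

Lemma L1b k u : 0 < k -> u \in Wk k -> exists t : 'S_(k + 1), t \in Tset k 1 /\ word t = u.
Proof.
move=> k0; rewrite inE => /orP [/eqP ->|].
  by exists 1%g; rewrite one_in_Tset word1.
case/mapP => m /size_bs sm ->.
have [t ht] := perm_exists (perm_cw k0 sm).
have [phi hphi] := phi_exists k.
set t' := Defs.pcomp (phi^-1)%g t.
have ht' : forall j, Phi k 1 (val (t' j)) = val (t j).
  by move=> j; rewrite -hphi /t' Defs.pcompE permKV.
have [a [b [sh eb ea]]] := mask_to_sh k0 sm.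
have ik : count id m < k by have := count_size id m; rewrite sm; lia.
exists t; split => //.
rewrite /Tset inE; apply/orP; right; apply/existsP; exists t'; apply/andP; split.
  apply/existsP; exists (Ordinal ik); apply/existsP; exists (a, b); apply/andP; split => //.
  apply/forallP => j; apply/eqP => /=.
  have k1 : 1 < k + 1 by lia.
  have sj := swp_lt (count id m) k1 (ltn_ord j).
  have [e1 e2] := stilde_nth a b ik sj.
  apply: (Phi_inj (ltn_ord (t' j)) e2).
  rewrite ht' e1 -(pextE t j) -nth_word // ht (cw_L eb ea) nth_swpL //.
    by rewrite size_L.
  by rewrite size_L.
by apply/forallP => j; apply/eqP; rewrite ht'.
Qed.

End Part6.

Section Part7.
Set Implicit Arguments. Unset Strict Implicit. Unset Printing Implicit Defensive.
Local Open Scope nat_scope.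

Definition suf k n := iota (k + 1) (n - (k + 1)).
Definition Ws n (s : 'S_n) k := [seq map (pext s) (u ++ suf k n) | u <- Wk k].

Lemma ext_word k n (t : 'S_(k + 1)) : k + 1 <= n ->
  [seq pext t j | j <- iota 0 n] = word t ++ suf k n.
Proof.
move=> kn; rewrite -(subnKC kn) iotaD map_cat word_pext /suf subnKC // add0n; congr (_ ++ _).
rewrite -[RHS]map_id; apply/eq_in_map => j; rewrite mem_iota => /andP [h _].
exact: pext_ge.
Qed.

Lemma forall_word n m (s : 'S_n) (t : 'S_m) :
  [forall j : 'I_n, val (s j) == pext t j] = (word s == [seq pext t j | j <- iota 0 n]).
Proof.
apply/forallP/eqP.
  move=> H; rewrite word_pext; apply/eq_in_map => j; rewrite mem_iota /= => jn.
  by rewrite (pext_ltE _ jn); apply/eqP; apply: H.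
move=> e j; apply/eqP; have := congr1 (fun L => nth 0 L j) e.
rewrite nth_word // (pextE s j) => ->.
by rewrite (nth_map 0) ?size_iota // nth_iota.
Qed.

Lemma perm_word m (t : 'S_m) : perm_eq (word t) (iota 0 m).
Proof.
apply: uniq_perm; first by rewrite word_pext map_inj_uniq ?iota_uniq //; apply: pext_inj.
  exact: iota_uniq.
move=> x; rewrite mem_iota /=; apply/idP/idP.
  by rewrite word_pext => /mapP [j]; rewrite mem_iota /= => jm ->; apply: pext_lt.
move=> xm; rewrite word_pext; apply/mapP; exists (pext (t^-1)%g x).
  by rewrite mem_iota /=; apply: pext_lt.
by have := pextK (t^-1)%g x; rewrite invgK.
Qed.

Lemma memS n (s : 'S_n) k p : 0 < k -> k < n ->
  (p \in lcos s (Tnset k 1 n)) = (word p \in Ws s k).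
Proof.
move=> k0 kn; have kn' : k + 1 <= n by lia.
apply/idP/idP.
  case/imsetP => q; rewrite inE => /existsP [t /andP [tT]].
  rewrite forall_word => /eqP eq ->.
  rewrite word_pcomp eq ext_word //; apply/mapP; exists (word t) => //.
  exact: L1a.
case/mapP => u uW e.
have [t [tT wt]] := L1b k0 uW.
apply/imsetP; exists (Defs.pcomp (s^-1)%g p); last by rewrite /Defs.pcomp mulgVK.
rewrite inE; apply/existsP; exists t; rewrite tT /= forall_word ext_word // wt.
apply/eqP; rewrite word_pcomp e -map_comp -[RHS]map_id; apply: eq_map => j /=.
exact: pextK.
Qed.

Lemma surjWs n (s : 'S_n) k w : 0 < k -> k < n -> w \in Ws s k -> exists p : 'S_n, word p = w.
Proof.
move=> k0 kn; have kn' : k + 1 <= n by lia.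
case/mapP => u uW ->.
have [t [_ wt]] := L1b k0 uW.
have pe : perm_eq [seq pext t j | j <- iota 0 n] (iota 0 n).
  rewrite ext_word // /suf -{2}(subnKC kn') iotaD add0n perm_cat2r.
  exact: perm_word.
have [q wq] := perm_exists pe.
exists (Defs.pcomp s q); by rewrite word_pcomp wq ext_word // wt.
Qed.

Lemma catIs_nat (s1 s2 s : seq nat) : s1 ++ s = s2 ++ s -> s1 = s2.
Proof.
move=> e; have := congr1 size e; rewrite !size_cat => /addIn hs.
have := congr1 (take (size s1)) e; by rewrite take_size_cat // hs take_size_cat.
Qed.

Lemma uniqWs n (s : 'S_n) k : 0 < k -> uniq (Ws s k).
Proof.
move=> k0; rewrite map_inj_uniq ?uniq_Wk //.
by move=> u v /(inj_map (@pext_inj _ s)) /catIs_nat.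
Qed.

End Part7.

Section Part8.
Set Implicit Arguments. Unset Strict Implicit. Unset Printing Implicit Defensive.
Local Open Scope ring_scope.

Definition pos n (p : 'S_n) := pext (p^-1)%g 0.

Lemma pext_pos n (p : 'S_n) : pext p (pos p) = 0%N.
Proof. by have := pextK (p^-1)%g 0; rewrite invgK. Qed.

Lemma pos_eq n (p : 'S_n) j : pext p j = 0%N -> j = pos p.
Proof. by move=> e; rewrite /pos -e pextK. Qed.

Lemma pos_lt n (p : 'S_n) : (0 < n)%N -> (pos p < n)%N.
Proof. by move=> h; apply: pext_lt. Qed.

Lemma good_iff n (s : 'S_n) (kk : 'I_n) : goodidx (s, kk) = (0 < kk)%N && (val kk == pos s).
Proof.
rewrite /goodidx /=; congr (_ && _); rewrite -pextE; apply/eqP/eqP.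
  exact: pos_eq.
by move=> ->; apply: pext_pos.
Qed.

Lemma good_inj n (x y : 'S_n * 'I_n) : goodidx x -> goodidx y -> x.1 = y.1 -> x = y.
Proof.
case: x => s kk; case: y => s' kk'; rewrite !good_iff /= => /andP [_ /eqP e1] /andP [_ /eqP e2] e.
by rewrite e; congr (_, _); apply/eqP; rewrite -(inj_eq val_inj) /= e1 e2 e.
Qed.

Definition Sx n (x : 'S_n * 'I_n) := lcos x.1 (Tnset (val x.2) 1 n).

Lemma BvecE n (x : 'S_n * 'I_n) p : Bvec x p = if p \in Sx x then 1 else 0.
Proof. by rewrite /Bvec /SumT ffunE; case: (_ \in _). Qed.

Lemma iota_split k n : (k + 1 <= n)%N -> iota 0 n = iota 0 (k + 1) ++ suf k n.
Proof. by move=> h; rewrite /suf -{1}(subnKC h) iotaD. Qed.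

Lemma T1 n (x : 'S_n * 'I_n) : goodidx x -> x.1 \in Sx x.
Proof.
case: x => s kk /andP [k0 _]; rewrite /Sx /= memS // ?ltn_ord //.
apply/mapP; exists (iota 0 (val kk + 1)); first by rewrite inE eqxx.
have h : (val kk + 1 <= n)%N by rewrite addn1 ltn_ord.
by rewrite -iota_split // word_pext.
Qed.

Lemma T2 n (x : 'S_n * 'I_n) p : goodidx x -> p \in Sx x -> p != x.1 ->
  pos p = 0%N \/ ((2 <= val x.2)%N /\ pos p = 1%N).
Proof.
case: x => s kk /andP [k0 /eqP sk]; rewrite /Sx /= memS // ?ltn_ord // => /mapP [u uW e] ne.
set k := val kk in k0 sk uW e *.
have kn : (k < n)%N := ltn_ord kk.
have kn1 : (k + 1 <= n)%N by rewrite addn1.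
move: uW; rewrite inE => /orP [/eqP eu|].
  by move: ne; rewrite -(inj_eq (@word_inj n)) e eu -iota_split // word_pext eqxx.
case/mapP => m /size_bs sm eu.
have sk' : pext s k = 0%N by rewrite (pextE s kk).
case: (cw_cases k0 sm) => [[_ ec]|[y [M' [od [_ ec]]]]].
  left; symmetry; apply: pos_eq.
  rewrite -nth_word; last lia.
  by rewrite e eu ec /= sk'.
right; split.
  have : (0 < count id m)%N by move: od; case: (count id m).
  have := count_size id m; rewrite sm; lia.
symmetry; apply: pos_eq; rewrite -nth_word; last lia.
by rewrite e eu ec /= sk'.
Qed.

Lemma sum_word n (S : pred 'S_n) (W : seq (seq nat)) (g : seq nat -> int) :
  uniq W -> (forall p, S p = (word p \in W)) ->
  (forall w, w \in W -> exists p : 'S_n, word p = w) ->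
  \sum_(p : 'S_n) (if S p then g (word p) else 0) = \sum_(w <- W) g w.
Proof.
move=> uW HS Hsurj.
rewrite -big_mkcond /= -big_filter -(big_map (@word n) xpredT g).
apply: perm_big; apply: uniq_perm => //.
  by rewrite map_inj_uniq ?filter_uniq ?index_enum_uniq //; apply: word_inj.
move=> w; apply/mapP/idP.
  by case=> p; rewrite mem_filter HS => /andP [h _] ->.
move=> wW; have [p wp] := Hsurj w wW; exists p => //.
by rewrite mem_filter HS wp wW mem_index_enum.
Qed.

Lemma ker n (x : 'S_n * 'I_n) : goodidx x -> beta (Bvec x) = 0.
Proof.
case: x => s kk /andP [k0 _]; apply/ffunP => q; rewrite !ffunE.
set k := val kk in k0 *; have kn : (k < n)%N := ltn_ord kk.
transitivity (\sum_(p : 'S_n) (if p \in lcos s (Tnset k 1 n)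
                               then ncoef (lbr (word p)) (word q) else 0)).
  by apply: eq_bigr => p _; rewrite BvecE /Sx /=; case: (_ \in _); rewrite ?mul1r ?mul0r.
rewrite (@sum_word n (fun p => p \in lcos s (Tnset k 1 n)) (Ws s k)
            (fun w => ncoef (lbr w) (word q))).
- rewrite /Ws big_map /Wk big_cons big_map.
  set f := pext s.
  have E1 : map f (iota 0 (k + 1) ++ suf k n) =
            (f 0%N :: map f (Ik k)) ++ f k :: map f (suf k n).
    by rewrite iota_Ik // map_cat /= map_rcons cat_rcons.
  have E2 : forall m, map f (cw k m ++ suf k n) =
      swpL (count id m) (f k :: wd (f 0%N) (map f (Ik k)) m) ++ map f (suf k n).
    by move=> m; rewrite map_cat /cw map_swpL /= map_wd.
  rewrite E1 (eq_bigr _ (fun m _ => congr1 (fun w => ncoef (lbr w) (word q)) (E2 m))).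
  by have := KER (f 0%N) (f k) (map f (Ik k)) (map f (suf k n)) (word q); rewrite size_map size_Ik.
- exact: uniqWs.
- by move=> p; rewrite memS.
- by move=> w; apply: surjWs.
Qed.

End Part8.

Section Part9.
Set Implicit Arguments. Unset Strict Implicit. Unset Printing Implicit Defensive.
Local Open Scope ring_scope.

Lemma uniq_word n (s : 'S_n) : uniq (word s).
Proof. by rewrite word_pext map_inj_uniq ?iota_uniq //; apply: pext_inj. Qed.

Lemma word_head n (s : 'S_n) : (0 < n)%N -> pos s = 0%N ->
  exists ws, word s = 0%N :: ws /\ 0%N \notin ws.
Proof.
move=> n0 ps; case e: (word s) => [|a ws].
  by move: (size_word s); rewrite e /=; lia.
have a0 : a = 0%N.
  have := nth_word s n0; rewrite e /= => ->; rewrite -{1}ps; exact: pext_pos.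
exists ws; split; first by rewrite a0.
by have := uniq_word s; rewrite e a0 /= => /andP [].
Qed.

Lemma coef_head n (s p : 'S_n) : (0 < n)%N -> pos s = 0%N -> pos p = 0%N ->
  ncoef (lbr (word s)) (word p) = (s == p)%:R.
Proof.
move=> n0 ps pp.
have [ws [es ns]] := word_head n0 ps; have [wp [ep _]] := word_head n0 pp.
by rewrite es ep lbr_coef_head // -(inj_eq (@word_inj n)) es ep eqseq_cons eqxx.
Qed.

Lemma pos_x0 n (p : 'S_n) (h : (pos p < n)%N) : (0 < pos p)%N -> goodidx (p, Ordinal h).
Proof. by move=> h0; rewrite good_iff /= h0 eqxx. Qed.

Lemma indep n (c : 'S_n * 'I_n -> int) :
  (forall p : 'S_n, \sum_(x : 'S_n * 'I_n | goodidx x) c x * Bvec x p = 0) ->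
  forall x, goodidx x -> c x = 0.
Proof.
move=> H.
have key : forall x : 'S_n * 'I_n, goodidx x ->
   (forall y, goodidx y -> y != x -> x.1 \in Sx y -> c y = 0) -> c x = 0.
  move=> x gx Hy; have := H x.1; rewrite (bigD1 x) // big1 /=.
    by rewrite BvecE T1 // mulr1 addr0.
  move=> y /andP [gy ne]; rewrite BvecE; case: ifP => h; last by rewrite mulr0.
  by rewrite (Hy y gy ne h) mul0r.
have pos1 : forall x : 'S_n * 'I_n, goodidx x -> pos x.1 = val x.2.
  by move=> [s kk]; rewrite good_iff => /andP [_ /eqP ->].
have A : forall x : 'S_n * 'I_n, goodidx x -> (2 <= val x.2)%N -> c x = 0.
  move=> x gx x2; apply: key => // y gy ne h.
  have ne1 : x.1 != y.1 by apply/negP => /eqP e; move: ne; rewrite (good_inj gy gx (esym e)) eqxx.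
  have := T2 gy h ne1; rewrite pos1 //; lia.
move=> x gx; case: (leqP 2 (val x.2)) => [|x2]; first exact: A.
apply: key => // y gy ne h.
have ne1 : x.1 != y.1 by apply/negP => /eqP e; move: ne; rewrite (good_inj gy gx (esym e)) eqxx.
have := T2 gy h ne1; rewrite pos1 //.
move: gx; case: x x2 {ne h ne1} => s kk /= x2; rewrite good_iff /= => /andP [k0 _].
case=> [|[y2 _]]; first lia.
exact: A.
Qed.

Lemma pos1 n (x : 'S_n * 'I_n) : goodidx x -> pos x.1 = val x.2.
Proof. by case: x => s kk; rewrite good_iff => /andP [_ /eqP ->]. Qed.

Lemma span n (f : gam n) : (0 < n)%N -> beta f = 0 ->
  exists c : 'S_n * 'I_n -> int,
    forall p : 'S_n, f p = \sum_(x : 'S_n * 'I_n | goodidx x) c x * Bvec x p.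
Proof.
move=> n0 hf.
pose S p := \sum_(y : 'S_n * 'I_n | goodidx y && (2 <= val y.2)%N) f y.1 * Bvec y p.
pose c (x : 'S_n * 'I_n) := if (2 <= val x.2)%N then f x.1 else f x.1 - S x.1.
exists c.
have claim : forall p : 'S_n, (0 < pos p)%N ->
    f p = \sum_(x : 'S_n * 'I_n | goodidx x) c x * Bvec x p.
  move=> p pp; set x0 := (p, Ordinal (pos_lt p n0)).
  have g0 : goodidx x0 by apply: pos_x0.
  have t1 : p \in Sx x0 := T1 g0.
  rewrite (bigD1 x0) //= BvecE t1 mulr1.
  have neq : forall y, goodidx y -> y != x0 -> p != y.1.
    move=> y gy ne; apply/negP => /eqP e; move: ne; by rewrite (good_inj gy g0 (esym e)) eqxx.
  case: (leqP 2 (pos p)) => p2.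
    rewrite big1 ?addr0 /c /=; first by rewrite p2.
    move=> y /andP [gy ne]; rewrite BvecE; case h: (p \in Sx y); last by rewrite mulr0.
    have := T2 gy h (neq y gy ne); lia.
  have -> : \sum_(x | goodidx x && (x != x0)) c x * Bvec x p = S p.
    rewrite /S [RHS](eq_bigl (fun y => (goodidx y && (y != x0)) && (2 <= val y.2)%N)); last first.
      move=> y /=; case: (goodidx y) => //=; case: (leqP 2 (val y.2)) => y2; rewrite ?andbT ?andbF //.
      case: eqP => // e; rewrite e /= in y2; lia.
    rewrite [RHS]big_mkcondr /=; apply: eq_bigr => y /andP [gy ne].
    case: (leqP 2 (val y.2)) => y2; first by rewrite /c y2.
    rewrite BvecE; case h: (p \in Sx y); last by rewrite mulr0.
    case: (T2 gy h (neq y gy ne)) => [e|[y2' _]]; first lia.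
    by have := leq_ltn_trans y2' y2; rewrite ltnn.
  rewrite /c /= (_ : (2 <= pos p)%N = false); last by lia.
  by rewrite subrK.
have hK : forall q : 'S_n,
    \sum_(s : 'S_n) (f s - \sum_(x : 'S_n * 'I_n | goodidx x) c x * Bvec x s)
         * ncoef (lbr (word s)) (word q) = 0.
  move=> q.
  rewrite (eq_bigr (fun s => f s * ncoef (lbr (word s)) (word q) -
     \sum_(x : 'S_n * 'I_n | goodidx x) c x * (Bvec x s * ncoef (lbr (word s)) (word q)))); last first.
    move=> s _; rewrite mulrBl big_distrl /=; congr (_ - _).
    by apply: eq_bigr => x _; rewrite mulrA.
  rewrite sumrB exchange_big /=.
  have := congr1 (fun g : gam n => g q) hf; rewrite /beta !ffunE => ->.
  rewrite big1 ?subr0 // => x gx; rewrite -mulr_sumr.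
  by have := congr1 (fun g : gam n => g q) (ker gx); rewrite /beta !ffunE => ->; rewrite mulr0.
move=> p; case: (ltnP 0 (pos p)) => pp; first exact: claim.
have pp0 : pos p = 0%N by lia.
have := hK p; rewrite (bigD1 p) //= [X in _ + X = _]big1.
  rewrite coef_head // eqxx mulr1 addr0 => /eqP; rewrite subr_eq0 => /eqP //.
move=> s ne; case: (ltnP 0 (pos s)) => ps.
  by rewrite -claim // subrr mul0r.
by rewrite coef_head //; [rewrite (negbTE ne) mulr0 | lia].
Qed.

Lemma good_pos n (x : 'S_n * 'I_n) : goodidx x -> (0 < val x.2)%N.
Proof. by case/andP. Qed.

Lemma Bvec_inj n (x y : 'S_n * 'I_n) : goodidx x -> goodidx y -> Bvec x = Bvec y -> x = y.
Proof.
move=> gx gy e.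
have hx : x.1 \in Sx y.
  have := congr1 (fun g : gam n => g x.1) e; rewrite /= !BvecE (T1 gx).
  by case: ifP => // _ /eqP; rewrite eq_sym oner_eq0.
have hy : y.1 \in Sx x.
  have := congr1 (fun g : gam n => g y.1) e; rewrite /= !BvecE (T1 gy).
  by case: ifP => // _ /eqP; rewrite oner_eq0.
case: (eqVneq x.1 y.1) => [e1|ne1]; first exact: good_inj.
have ne2 : y.1 != x.1 by rewrite eq_sym.
have px := pos1 gx; have py := pos1 gy; have x0 := good_pos gx; have y0 := good_pos gy.
case: (T2 gy hx ne1) => [|[y2 x1]]; first lia.
case: (T2 gx hy ne2) => [|[x2 _]]; first lia.
lia.
Qed.

Lemma card_good n : (0 < n)%N -> #|@goodidx n| = (n`! - (n.-1)`!)%N.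
Proof.
move=> n0.
have inj : {in @goodidx n &, injective (fun x : 'S_n * 'I_n => x.1)}.
  by move=> x y gx gy; apply: good_inj.
rewrite -(card_in_imset inj).
have -> : [set x.1 | x in @goodidx n] = ~: [set p : 'S_n | pos p == 0%N].
  apply/setP => p; rewrite in_setC inE -lt0n; apply/imsetP/idP.
    by case=> x gx ->; rewrite (pos1 gx) good_pos.
  move=> pp; exists (p, Ordinal (pos_lt p n0)) => //.
  exact: pos_x0.
clear inj; have := cardsC [set p : 'S_n | pos p == 0%N]; rewrite card_Sn.
case: n n0 => [|n'] // _.
have -> : #|[set p : 'S_n'.+1 | pos p == 0%N]| = n'`!.
  have e : n' = #|[set~ (ord0 : 'I_n'.+1)]| by rewrite cardsC1 card_ord.
  rewrite [in RHS]e -card_perm; apply: eq_card => p.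
  rewrite inE /perm_on; apply/eqP/subsetP.
    move=> pp x; rewrite !inE; apply: contra => /eqP ->.
    have h := pext_pos p; rewrite pp in h.
    by apply/eqP; apply: val_inj => /=; rewrite -(pextE p ord0) h.
  move=> H; symmetry; apply: pos_eq; rewrite (pextE p ord0); apply/eqP.
  apply/negPn/negP => ne.
  have : ord0 \in [set~ (ord0 : 'I_n'.+1)].
    apply: H; rewrite inE; apply/negP => /eqP e2; move: ne; by rewrite e2.
  by rewrite !inE eqxx.
by move=> <- /=; rewrite addKn.
Qed.

End Part9.

Local Open Scope ring_scope.

Theorem theorem2 (n : nat) (hn : (2 <= n)%N) :
  (* every basis element lies in Ker(beta_n) *)
  (forall x : 'S_n * 'I_n, goodidx x -> beta (Bvec x) = 0)
  (* linear independence over Z *)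
  /\ (forall c : 'S_n * 'I_n -> int,
        (forall p : 'S_n, \sum_(x : 'S_n * 'I_n | goodidx x) c x * Bvec x p = 0) ->
        forall x, goodidx x -> c x = 0)
  (* spanning Ker(beta_n) over Z *)
  /\ (forall f : gam n, beta f = 0 ->
        exists c : 'S_n * 'I_n -> int,
          forall p : 'S_n, f p = \sum_(x : 'S_n * 'I_n | goodidx x) c x * Bvec x p)
  (* rank *)
  /\ size (undup [seq Bvec x | x <- enum (@goodidx n)]) = ((n.-1)`! * n.-1)%N.
Proof.
have n0 : (0 < n)%N by lia.
split; first by move=> x; apply: ker.
split; first by move=> c H x gx; exact: indep H x gx.
split; first by move=> f hf; exact: span n0 hf.
rewrite undup_id; last first.
  rewrite map_inj_in_uniq ?enum_uniq // => x y; rewrite !mem_enum => gx gy.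
  exact: Bvec_inj.
rewrite size_map -cardE card_good //.
case: n hn {n0} => [|n'] // _ /=.
by rewrite factS mulSn addKn mulnC.
Qed.
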